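(* Let $T$ be a finite tree rooted at a vertex $r$, and let $\omega: V(T)\to [0,\infty)$ be a nonnegative weight function with $\omega(T)=\sum_{v\in V(T)}\omega(v)=1$. Then at least one of the following holds: (i) there is a vertex $u\in V(T)$ such that the unique $(r,u)$-path $P$ in $T$ satisfies $\omega(P)\ge \frac13$; (ii) there exist unrelated sets $A,B\subseteq V(T)$ with $\omega(A)\ge\frac13$ and $\omega(B)\ge\frac13$. Moreover, the constant $\frac13$ is best possible: for every real $c>\frac13$ there exist a finite tree $T$ rooted at $r$ and a nonnegative weight function $\omega$ on $V(T)$ with $\omega(T)=1$ such that every $(r,u)$-path $P$ ($u\in V(T)$) has $\omega(P)<c$ and every pair of unrelated sets $A,B\subseteq V(T)$ has $\min\{\omega(A),\omega(B)\}<c$.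
   Context: Let $T$ be a tree rooted at $r$. A vertex $y$ is a descendant of a vertex $x$ if $x$ lies on the unique $(r,y)$-path in $T$ (so every vertex is a descendant of itself). Two vertices of $T$ are related if one is a descendant of the other; otherwise they are unrelated. Two subsets $A,B\subseteq V(T)$ are unrelated if every $a\in A$ and every $b\in B$ are unrelated (in particular $A\cap B=\emptyset$). For $S\subseteq V(T)$, $\omega(S)=\sum_{s\in S}\omega(s)$, and for a subgraph $H$ of $T$, $\omega(H)=\omega(V(H))$. *)

(* Defs.v *)
From HB Require Import structures.
From mathcomp Require Import all_boot all_order all_algebra.
Set Implicit Arguments. Unset Strict Implicit. Unset Printing Implicit Defensive.
Import Order.TTheory GRing.Theory Num.Theory.

(* A finite rooted tree on vertex set T (a finType) is given by a parent map
   [par] and a root [r]: the root is its own parent and every vertex reaches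
   the root by iterating [par].  (Such a map is automatically acyclic off r,
   and the graph with edges {v, par v}, v <> r, is a tree rooted at r.) *)
Definition rooted_tree (T : finType) (par : T -> T) (r : T) : Prop :=
  par r = r /\ forall v : T, exists k : nat, iter k par v = r.

(* Since the
   depth of any vertex is < #|T|, bounding k by #|T| loses nothing. *)
Definition desc (T : finType) (par : T -> T) (x y : T) : bool :=
  [exists k : 'I_#|T|, iter k par y == x].

Definition related (T : finType) (par : T -> T) (x y : T) : bool :=
  desc par x y || desc par y x.

Definition unrelated_sets (T : finType) (par : T -> T) (A B : {set T}) : Prop :=
  forall a b, a \in A -> b \in B -> ~~ related par a b.

Definition root_path (T : finType) (par : T -> T) (u : T) : {set T} :=
  [set x | desc par x u].

Definition wt (R : numDomainType) (T : finType) (w : T -> R) (S : {set T}) : R :=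
  (\sum_(s in S) w s)%R.

(* Main.v *)
Require Import Defs.
From HB Require Import structures.
From mathcomp Require Import all_boot all_order all_algebra zify lra.
Import Order.TTheory GRing.Theory Num.Theory.
Local Open Scope ring_scope.
Set Implicit Arguments. Unset Strict Implicit.

Section Tree.
Variables (T : finType) (par : T -> T) (r : T).
Hypothesis Ht : rooted_tree par r.

Lemma iter_r k : iter k par r = r.
Proof. case: Ht => pr _; by elim: k => //= k ->. Qed.

Lemma acyclic k v : (0 < k)%N -> iter k par v = v -> v = r.
Proof.
move=> k0 hv; case: Ht => _ /(_ v) [d hd].
have hm : forall n, iter (n * k) par v = v.
  by elim=> [|n IH] //; rewrite mulSn iterD IH hv.
rewrite -(hm d) -(subnK (_ : (d <= d * k)%N)) ?iterD ?hd ?iter_r //.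
by rewrite leq_pmulr.
Qed.

Lemma depth_lt y : exists2 d, (d < #|T|)%N & iter d par y = r.
Proof.
case: Ht => _ /(_ y) hex.
have ex : exists k, iter k par y == r by case: hex => k hk; exists k; apply/eqP.
case: (ex_minnP ex) => d /eqP hd hmin.
exists d => //.
have key : forall i j, (i < j)%N -> (j <= d)%N -> iter i par y = iter j par y -> False.
  move=> i j ij jd e.
  have := hmin (d - j + i)%N.
  rewrite iterD e -iterD subnK // hd eqxx => /(_ isT).
  lia.
have hinj : {in iota 0 d.+1 &, injective (fun i => iter i par y)}.
  move=> i j; rewrite !mem_iota !add0n => hi hj hij.
  case: (ltngtP i j) => // hlt; exfalso.
    by apply: (key i j) => //; lia.
  by apply: (key j i) => //; lia.
have hu : uniq [seq iter i par y | i <- iota 0 d.+1].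
  by rewrite (map_inj_in_uniq hinj) iota_uniq.
have hs : {subset [seq iter i par y | i <- iota 0 d.+1] <= enum T}.
  by move=> z _; rewrite mem_enum.
by have := uniq_leq_size hu hs; rewrite size_map size_iota -cardE.
Qed.

Lemma descP x y : reflect (exists k, iter k par y = x) (desc par x y).
Proof.
apply: (iffP existsP) => [[k /eqP hk]|[k hk]]; first by exists k.
case: (ltnP k #|T|) => hk'.
  by exists (Ordinal hk'); apply/eqP.
case: (depth_lt y) => d hd hdr.
exists (Ordinal hd) => /=; apply/eqP.
have dk : (d <= k)%N by apply: ltnW; apply: leq_trans hd hk'.
by rewrite -hk -(subnK dk) iterD hdr iter_r.
Qed.

Lemma desc_refl x : desc par x x.
Proof. by apply/descP; exists 0%N. Qed.

Lemma desc_trans x y z : desc par x y -> desc par y z -> desc par x z.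
Proof.
move=> /descP [k hk] /descP [l hl]; apply/descP; exists (k + l)%N.
by rewrite iterD hl.
Qed.

Lemma desc_total x y z : desc par x z -> desc par y z -> related par x y.
Proof.
move=> /descP [i hi] /descP [j hj]; rewrite /related.
case: (leqP i j) => h.
  apply/orP; right; apply/descP; exists (j - i)%N.
  by rewrite -hi -iterD subnK.
apply/orP; left; apply/descP; exists (i - j)%N.
by rewrite -hj -iterD subnK // ltnW.
Qed.

Lemma related_sym x y : related par x y = related par y x.
Proof. by rewrite /related orbC. Qed.

Definition child m c := (par c == m) && (c != m).

Lemma child_desc m c : child m c -> desc par m c.
Proof. by case/andP => /eqP <- _; apply/descP; exists 1%N. Qed.

Lemma not_desc_child m c : child m c -> ~~ desc par c m.
Proof.
case/andP => /eqP pc cm; apply/negP => /descP [j hj].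
have : iter j.+1 par m = m by rewrite iterS hj.
move=> /(@acyclic j.+1 m (ltn0Sn j)) mr.
by move: hj cm; rewrite mr iter_r => <-; rewrite eqxx.
Qed.

Lemma child_eq m a b : child m a -> child m b -> desc par a b -> a = b.
Proof.
move=> ha hb /descP [k hk].
case: k hk => [//|k]; rewrite iterSr.
case/andP: hb => /eqP -> _ hk.
have : desc par a m by apply/descP; exists k.
by rewrite (negbTE (not_desc_child ha)).
Qed.

Lemma sibling m a b x y : child m a -> child m b -> a != b ->
  desc par a x -> desc par b y -> ~~ related par x y.
Proof.
move=> ha hb ab hx hy; apply/negP => /orP [] h.
- have := desc_total (desc_trans hx h) hy.
  case/orP => h2.
    by rewrite (child_eq ha hb h2) eqxx in ab.
  by rewrite (child_eq hb ha h2) eqxx in ab.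
- have := desc_total hx (desc_trans hy h).
  case/orP => h2.
    by rewrite (child_eq ha hb h2) eqxx in ab.
  by rewrite (child_eq hb ha h2) eqxx in ab.
Qed.

Lemma unrel_sub m x y : ~~ related par m x -> desc par m y -> ~~ related par y x.
Proof.
move=> hmx hy; apply/negP => /orP [] h.
  by rewrite /related (desc_trans hy h) in hmx.
by rewrite related_sym (desc_total h hy) in hmx.
Qed.

Lemma child_decomp m x : desc par m x -> x != m -> exists c, child m c && desc par c x.
Proof.
move=> /descP hx xm.
have ex : exists k, iter k par x == m by case: hx => k hk; exists k; apply/eqP.
case: (ex_minnP ex) => k /eqP hk hmin.
case: k hk hmin => [/= hk|k hk hmin]; first by rewrite hk eqxx in xm.
exists (iter k par x); apply/andP; split; last by apply/descP; exists k.
apply/andP; split; first by rewrite -iterS hk.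
apply/negP => /eqP e.
by have := hmin k; rewrite e eqxx => /(_ isT); rewrite ltnn.
Qed.

Definition sub m := [set x | desc par m x].
Definition subs (l : seq T) := [set x | has (fun c => desc par c x) l].

Lemma sub_proper m c : child m c -> (#|sub c| < #|sub m|)%N.
Proof.
move=> hc; apply: proper_card; apply/properP; split.
  apply/subsetP => x; rewrite !inE; apply: desc_trans (child_desc hc).
exists m; rewrite !inE ?desc_refl //.
exact: not_desc_child.
Qed.

Lemma unrelU (A B C : {set T}) : unrelated_sets par A C -> unrelated_sets par B C ->
  unrelated_sets par (A :|: B) C.
Proof. by move=> h1 h2 a b; rewrite inE => /orP [] ha hb; [apply: h1|apply: h2]. Qed.

Lemma unrel_sym (A B : {set T}) : unrelated_sets par A B -> unrelated_sets par B A.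
Proof. by move=> h a b ha hb; rewrite related_sym; apply: h. Qed.

Lemma unrel_subs (A : {set T}) l : (forall c, c \in l -> unrelated_sets par A (sub c)) ->
  unrelated_sets par A (subs l).
Proof.
move=> h a b ha; rewrite inE => /hasP [c cl hc].
by apply: (h c cl) => //; rewrite inE.
Qed.

End Tree.

Section Main.
Variables (R : archiRealFieldType) (T : finType) (par : T -> T) (r : T) (w : T -> R).
Hypothesis Ht : rooted_tree par r.
Hypothesis w0 : forall v, 0 <= w v.

Lemma wt_cover (S A B C : {set T}) :
  (forall x, x \in S -> [|| x \in A, x \in B | x \in C]) ->
  wt w S <= wt w A + wt w B + wt w C.
Proof.
move=> h; rewrite /wt !(big_mkcond (fun s => s \in _)) -!big_split /=.
apply: ler_sum => v _; have := w0 v.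
case hS: (v \in S); last by case: (v \in A); case: (v \in B); case: (v \in C) => /= ?; lra.
by move: (h v hS); case: (v \in A); case: (v \in B); case: (v \in C) => //= _ ?; lra.
Qed.

Hypothesis Hsum : \sum_(v : T) w v = 1.
Hypothesis Hp : forall u, wt w (root_path par u) < 3^-1.

Definition Goal := exists A B : {set T}, unrelated_sets par A B /\
           wt w A >= 3^-1 /\ wt w B >= 3^-1.

Lemma total_le (A B C : {set T}) : (forall x, [|| x \in A, x \in B | x \in C]) ->
  1 <= wt w A + wt w B + wt w C.
Proof.
move=> h; rewrite -Hsum.
have -> : \sum_(v : T) w v = wt w [set: T] by rewrite /wt; apply: eq_bigl => v; rewrite inE.
by apply: wt_cover => x _; apply: h.
Qed.

Lemma outer n : forall m, (#|sub par m| <= n)%N -> forall L Rs : {set T},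
  unrelated_sets par L Rs -> (forall x, x \in L :|: Rs -> ~~ related par m x) ->
  wt w L < 3^-1 -> wt w Rs < 3^-1 ->
  (forall x, [|| x \in L, x \in Rs, desc par m x | desc par x m]) -> Goal.
Proof.
elim: n => [|n IH] m hn L Rs hLR hout hL hR hcov.
  by move: hn; rewrite leqn0 => /eqP/cards0_eq/setP/(_ m); rewrite !inE (desc_refl Ht).
have inner : forall rest L', uniq rest -> all (child par m) rest ->
   unrelated_sets par L' Rs ->
   (forall c, c \in rest -> unrelated_sets par L' (sub par c)) ->
   (forall c, c \in rest -> unrelated_sets par Rs (sub par c)) ->
   wt w L' < 3^-1 ->
   (forall x, [|| x \in L', x \in Rs, desc par x m | x \in subs par rest]) -> Goal.
  elim=> [|c tail IHi] L' hu hall hL'R hL'c hRc hL' hcov'.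
    have h3 : forall x, [|| x \in L', x \in Rs | x \in root_path par m].
      move=> x; move: (hcov' x); rewrite /root_path inE.
      by case/or4P => [->|->|->|]; rewrite ?orbT // inE.
    have := total_le h3; have := Hp m; lra.
  case/andP: hu => ctail hu; case/andP: hall => hc hall.
  have sib : forall c', c' \in tail -> unrelated_sets par (sub par c) (sub par c').
    move=> c' hc' x y; rewrite !inE => hx hy.
    apply: (sibling Ht hc (allP hall c' hc')) => //.
    by apply/negP => /eqP e; rewrite e hc' in ctail.
  have cc : c \in sub par c by rewrite inE (desc_refl Ht).
  case: (lerP (3^-1) (wt w (L' :|: sub par c))) => hA.
    case: (lerP (3^-1) (wt w (Rs :|: subs par tail))) => hB.
      exists (L' :|: sub par c), (Rs :|: subs par tail); split => //.
      apply: unrelU; apply: unrel_sym; apply: unrelU.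
      - by apply: unrel_sym.
      - by apply: unrel_sym; apply: unrel_subs => c' hc'; apply: hL'c; rewrite inE hc' orbT.
      - by apply: hRc; rewrite inE eqxx.
      - by apply: unrel_sym; apply: unrel_subs.
    apply: (IH c _ L' (Rs :|: subs par tail)) => //.
    - by rewrite -ltnS; apply: leq_trans hn; apply: (sub_proper Ht).
    - apply: unrel_sym; apply: unrelU; first by apply: unrel_sym.
      by apply: unrel_sym; apply: unrel_subs => c' hc'; apply: hL'c; rewrite inE hc' orbT.
    - move=> x; rewrite !inE => /or3P [] hx.
      + by rewrite related_sym; apply: (hL'c c _ x c hx cc); rewrite inE eqxx.
      + by rewrite related_sym; apply: (hRc c _ x c hx cc); rewrite inE eqxx.
      + have hx' : x \in subs par tail by rewrite inE.
        by rewrite related_sym; apply: (unrel_sym (unrel_subs sib)) hx' cc.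
    - move=> x; move: (hcov' x); rewrite !inE /= -!orbA.
      case/or4P => [->//|->|hx|/orP [->|->]]; rewrite ?orbT //.
      by rewrite (desc_trans Ht hx (child_desc Ht hc)) !orbT.
  apply: (IHi (L' :|: sub par c)) => //.
  - by apply: unrelU => //; apply: unrel_sym; apply: hRc; rewrite inE eqxx.
  - move=> c' hc'; apply: unrelU; first by apply: hL'c; rewrite inE hc' orbT.
    exact: sib.
  - by move=> c' hc'; apply: hRc; rewrite inE hc' orbT.
  - move=> x; move: (hcov' x); rewrite !inE /= -!orbA.
    by case/or4P => [->|->|->|/orP [->|->]]; rewrite ?orbT.
pose rest := [seq c <- enum T | child par m c].
have hLRm : forall X : {set T}, X \subset L :|: Rs -> forall c, c \in rest -> unrelated_sets par X (sub par c).
  move=> X /subsetP hX c; rewrite mem_filter => /andP [hc _] x y hx; rewrite inE => hy.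
  rewrite related_sym; apply: (unrel_sub Ht (hout x (hX x hx))).
  have h1 := child_desc Ht hc. exact: (desc_trans Ht h1 hy).
apply: (inner rest L).
- by rewrite filter_uniq // enum_uniq.
- exact: filter_all.
- done.
- by apply: hLRm; apply: subsetUl.
- by apply: hLRm; apply: subsetUr.
- done.
- move=> x; move: (hcov x) => /or4P [->|->|hx|->]; rewrite ?orbT //.
  case: (eqVneq x m) => [->|xm]; first by rewrite (desc_refl Ht) !orbT.
  case: (child_decomp Ht hx xm) => c /andP [hc hcx].
  rewrite inE; apply/orP; right; apply/orP; right; apply/orP; right.
  by apply/hasP; exists c => //; rewrite mem_filter hc mem_enum.
Qed.

End Main.

Theorem theorem2 (R : archiRealFieldType) :
  (forall (T : finType) (par : T -> T) (r : T) (w : T -> R),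
     rooted_tree par r ->
     (forall v, 0 <= w v) ->
     \sum_(v : T) w v = 1 ->
     (exists u : T, wt w (root_path par u) >= 3^-1)
     \/ (exists A B : {set T}, unrelated_sets par A B /\
           wt w A >= 3^-1 /\ wt w B >= 3^-1))
  /\
  (forall c : R, 3^-1 < c ->
     exists (T : finType) (par : T -> T) (r : T) (w : T -> R),
       [/\ rooted_tree par r,
           (forall v, 0 <= w v),
           \sum_(v : T) w v = 1,
           (forall u : T, wt w (root_path par u) < c) &
           (forall A B : {set T}, unrelated_sets par A B ->
              Num.min (wt w A) (wt w B) < c)]).
Proof.
have i3 : (0 : R) < 3^-1 by rewrite invr_gt0 ltr0n.
split.
  move=> T par r w Ht w0 Hs.
  case: (boolP [exists u, 3^-1 <= wt w (root_path par u)]) => [/existsP [u hu]|hn].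
    by left; exists u.
  right.
  have Hp : forall u, wt w (root_path par u) < 3^-1.
    by move=> u; rewrite ltNge; apply/negP => h; move/existsP: hn; apply; exists u.
  have w00 : wt w set0 = 0 by rewrite /wt big_set0.
  apply: (@outer R T par r w Ht w0 Hs Hp #|T| r _ set0 set0).
  - exact: max_card.
  - by move=> a b; rewrite inE.
  - by move=> x; rewrite !inE.
  - by rewrite w00.
  - by rewrite w00.
  - move=> x; apply/orP; right; apply/orP; right; apply/orP; left.
    have [_ /(_ x) [k hk]] := Ht; apply/(descP Ht); by exists k.
move=> c hc.
pose par := fun _ : 'I_4 => (ord0 : 'I_4).
pose w := fun i : 'I_4 => if i == ord0 then (0:R) else 3^-1.
have Ht : rooted_tree par ord0 by split => // v; exists 1%N.
have hdesc : forall x y, desc par x y = (x == y) || (x == ord0).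
  move=> x y; apply/(descP Ht)/idP.
    by case=> [[|k]] /= <-; rewrite ?eqxx ?orbT.
  case/orP => /eqP ->; [by exists 0%N | by exists 1%N].
have w0 : forall v, 0 <= w v by move=> v; rewrite /w; case: ifP => _ //; exact: ltW i3.
have hwA : forall S : {set 'I_4}, ord0 \notin S -> wt w S = 3^-1 *+ #|S|.
  move=> S hS; rewrite /wt -sumr_const; apply: eq_bigr => s hs; rewrite /w ifF //.
  by apply/eqP => e; rewrite -e hs in hS.
exists 'I_4, par, ord0, w; split => //.
- rewrite big_ord_recl /w eqxx add0r.
  rewrite (eq_bigr (fun _ => 3^-1)) //.
  rewrite sumr_const card_ord -[_ *+ 3]mulr_natr mulVf //.
  by rewrite pnatr_eq0.
- move=> u; apply: le_lt_trans hc.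
  have := @wt_cover R _ w w0 (root_path par u) [set u] [set ord0] set0.
  rewrite /wt !big_set1 big_set0 /w eqxx addr0 addr0 => h.
  apply: le_trans (h _) _.
  + by move=> x; rewrite !inE hdesc orbA orbF.
  + by case: ifP => _; [exact: ltW i3|].
- move=> A B hAB.
  have hrel0 : forall y, related par ord0 y by move=> y; rewrite /related hdesc eqxx orbT.
  have wt0 : forall S : {set 'I_4}, (forall y, y \notin S) -> wt w S = 0.
    by move=> S hS; rewrite /wt big1 // => s; rewrite (negbTE (hS s)).
  case: (boolP (ord0 \in A)) => hA.
    rewrite gt_min; apply/orP; right; rewrite wt0; first exact: lt_trans i3 hc.
    by move=> y; apply/negP => hy; have := hAB _ _ hA hy; rewrite hrel0.
  case: (boolP (ord0 \in B)) => hB.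
    rewrite gt_min; apply/orP; left; rewrite wt0; first exact: lt_trans i3 hc.
    by move=> y; apply/negP => hy; have := hAB _ _ hy hB; rewrite related_sym hrel0.
  rewrite !hwA //.
  have hI : A :&: B = set0.
    apply/setP => x; rewrite !inE; apply/negP => /andP [xa xb].
    by have := hAB x x xa xb; rewrite /related hdesc eqxx.
  have hU : (#|A :|: B| <= 3)%N.
    have : A :|: B \subset [set~ ord0].
      apply/subsetP => x; rewrite !inE; case/orP => hx; apply/eqP => e; subst x.
        by rewrite hx in hA.
      by rewrite hx in hB.
    by move/subset_leq_card; rewrite cardsC1 card_ord.
  have hab : (#|A| + #|B| <= 3)%N by rewrite -cardsUI hI cards0 addn0.
  have small : forall k, (k <= 1)%N -> (3^-1 : R) *+ k < c.
    case=> [|[|//]] _; [by rewrite mulr0n; exact: lt_trans i3 hc | by rewrite mulr1n].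
  rewrite gt_min; case: (leqP #|A| 1) => h1; first by rewrite small.
  by rewrite (small #|B|) ?orbT //; lia.
Qed.
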